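(* Let $n$ and $0<n_1<\cdots<n_d<n$ be integers with $m_1=n_1$, $m_k=n_k-n_{k-1}$ ($2\le k\le d$), $m_{d+1}=n-n_d$, and equip $\mathrm{Flag}(n_1,\dots,n_d;n)=\{(VJ_1V^{\mathsf T},\dots,VJ_{d+1}V^{\mathsf T}):V\in\mathrm{O}(n)\}\subseteq(\mathbb{R}^{n\times n})^{d+1}$ with the metric induced by the Frobenius inner product. Let $V(t)$ be a differentiable curve in $\mathrm{O}(n)$ with $\Lambda(t)=V(t)^{\mathsf T}\dot V(t)$, $\Lambda(k,k)\equiv0$ ($k=1,\dots,d+1$), and $c(t)=V(t)(J_1,\dots,J_{d+1})V(t)^{\mathsf T}$. Let $Y(t)=V(t)\big(X(t)J_1-J_1X(t),\dots,X(t)J_{d+1}-J_{d+1}X(t)\big)V(t)^{\mathsf T}$ with $X(t)\in\mathfrak{so}(n)$ differentiable and $X(k,k)\equiv0$. Then $Y$ is parallel along $c$ if and only if \[ \dot X(t)=\tfrac12\,\pi\big([X(t),\Lambda(t)]\big). \]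
   Context: $J_k=\operatorname{diag}(-I_{m_1},\dots,-I_{m_{k-1}},I_{m_k},-I_{m_{k+1}},\dots,-I_{m_{d+1}})$ for $k=1,\dots,d+1$. $V(M_1,\dots,M_{d+1})V^{\mathsf T}$ denotes $(VM_1V^{\mathsf T},\dots,VM_{d+1}V^{\mathsf T})$. For an $n\times n$ matrix $M$, $M(p,q)$ denotes its $(p,q)$ block in the partition $n=m_1+\cdots+m_{d+1}$; for $M\in\mathfrak{so}(n)$, $\pi(M)$ is obtained by setting all diagonal blocks $M(p,p)$ to zero; $[X,\Lambda]=X\Lambda-\Lambda X$. $Y$ is parallel along $c$ iff the orthogonal projection of $\dot Y(t)$ onto $\mathbb{T}_{c(t)}\mathrm{Flag}$ vanishes for all $t$. *)

(* Defs.v *)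
From HB Require Import structures.
From mathcomp Require Import all_boot all_order all_algebra.
From mathcomp Require Import all_classical all_reals all_analysis.
Unset Printing Implicit Defensive.
Import Order.TTheory GRing.Theory Num.Theory.
Local Open Scope ring_scope.


(* The partition n = m_1 + ... + m_(d+1) is given by ns = [:: n_1; ...; n_d].
   blk ns i (0-based, in 0..d) = number of n_j with n_j <= i, i.e. the block
   containing index i (block k+1 of the paper corresponds to blk = k). *)
Definition blk (ns : seq nat) (n : nat) (i : 'I_n) : nat :=
  count (fun a => (a <= i)%N) ns.

(* J_k (k : 'I_(d+1) is the 0-based index of the paper's J_(k+1)) *)
Definition Jmat (R : realType) (ns : seq nat) (n : nat) (k : 'I_(size ns).+1) : 'M[R]_n :=
  \matrix_(i, j) (if i == j then (if blk ns n i == k :> nat then 1 else -1) else 0).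

Definition piblk (R : realType) (ns : seq nat) (n : nat) (M : 'M[R]_n) : 'M[R]_n :=
  \matrix_(i, j) (if blk ns n i == blk ns n j then 0 else M i j).

Definition orthogonal_mx (R : realType) (n : nat) (V : 'M[R]_n) : Prop := V *m V^T = 1%:M.

Definition skew_mx (R : realType) (n : nat) (X : 'M[R]_n) : Prop := X^T = - X.

Definition frob (R : realType) (n : nat) (A B : 'M[R]_n) : R := \sum_i \sum_j A i j * B i j.

Definition frob_tuple (R : realType) (d n : nat) (A B : 'I_d.+1 -> 'M[R]_n) : R :=
  \sum_k frob R n (A k) (B k).

Definition in_Flag (R : realType) (ns : seq nat) (n : nat) (P : 'I_(size ns).+1 -> 'M[R]_n) : Prop :=
  exists V : 'M[R]_n, orthogonal_mx R n V /\
    forall k, P k = V *m Jmat R ns n k *m V^T.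

Definition tangent_Flag (R : realType) (ns : seq nat) (n : nat) (P : 'I_(size ns).+1 -> 'M[R]_n)
  (W : 'I_(size ns).+1 -> 'M[R]_n) : Prop :=
  exists g : 'I_(size ns).+1 -> R -> 'M[R]_n,
    [/\ forall k s, derivable (g k) s 1,
        forall s, in_Flag R ns n (fun k => g k s),
        forall k, g k 0 = P k &
        forall k, W k = derive1 (g k) 0].

(* Y is parallel along c: the orthogonal projection of dY/dt(t) onto
   T_{c(t)} Flag vanishes for all t, i.e. dY/dt(t) is Frobenius-orthogonal to
   every tangent vector at c(t). *)
Definition parallel_along (R : realType) (ns : seq nat) (n : nat)
  (c Y : R -> 'I_(size ns).+1 -> 'M[R]_n) : Prop :=
  forall t (W : 'I_(size ns).+1 -> 'M[R]_n),
    tangent_Flag R ns n (c t) W ->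
    frob_tuple R (size ns) n (fun k => derive1 (fun s => Y s k) t) W = 0.

(* Main.v *)
Require Import Defs.
From HB Require Import structures.
From mathcomp Require Import all_boot all_order all_algebra.
From mathcomp Require Import all_classical all_reals all_analysis.
From mathcomp Require Import ring lra.
Import Order.TTheory GRing.Theory Num.Theory.
Local Open Scope ring_scope.

Section MD.
Variable R : realType.

Lemma mx_der m p (F : R -> 'M[R]_(m,p)) t : derivable F t 1 ->
  derive1 F t = \matrix_(i,j) derive1 (fun s => F s i j) t.
Proof.
move=> dF; rewrite derive1E derive_mx //; apply/matrixP => i j.
by rewrite !mxE derive1E.
Qed.

Lemma mder_mul m p q (F : R -> 'M[R]_(m,p)) (G : R -> 'M[R]_(p,q)) t :
  derivable F t 1 -> derivable G t 1 ->
  derivable (fun s => F s *m G s) t 1 /\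
  derive1 (fun s => F s *m G s) t = derive1 F t *m G t + F t *m derive1 G t.
Proof.
move=> dF dG.
have dFe := (derivable_mxP F t 1).1 dF.
have dGe := (derivable_mxP G t 1).1 dG.
have E : forall i j, (fun s => (F s *m G s) i j) =
   \sum_(l < p) ((fun s => F s i l) * (fun s => G s l j)).
  move=> i j; apply/funext => s; rewrite mxE fct_sumE; apply: eq_bigr => l _.
  by [].
have dP : forall i j, derivable (fun s => (F s *m G s) i j) t 1.
  move=> i j; rewrite E; apply: derivable_sum => l; exact: derivableM.
have dM : derivable (fun s => F s *m G s) t 1 by apply/derivable_mxP.
split => //.
rewrite !mx_der //; apply/matrixP => i j; rewrite !mxE.
rewrite E derive1E derive_sum; last by move=> l; exact: derivableM.
rewrite -big_split /=; apply: eq_bigr => l _.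
rewrite deriveM // !mxE -!derive1E /=.
by rewrite addrC; congr (_ + _); exact: mulrC.
Qed.

Lemma mder_tr m p (F : R -> 'M[R]_(m,p)) t : derivable F t 1 ->
  derivable (fun s => (F s)^T) t 1 /\ derive1 (fun s => (F s)^T) t = (derive1 F t)^T.
Proof.
move=> dF; have dFe := (derivable_mxP F t 1).1 dF.
have dT : derivable (fun s => (F s)^T) t 1.
  apply/derivable_mxP => i j.
  by have -> : (fun s => (F s)^T i j) = (fun s => F s j i) by apply/funext => s; rewrite mxE.
split => //; rewrite !mx_der //; apply/matrixP => i j; rewrite !mxE.
by congr derive1; apply/funext => s; rewrite mxE.
Qed.

Lemma mder_add m p (F G : R -> 'M[R]_(m,p)) t : derivable F t 1 -> derivable G t 1 ->
  derivable (fun s => F s + G s) t 1 /\ derive1 (fun s => F s + G s) t = derive1 F t + derive1 G t.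
Proof.
move=> dF dG; split; first exact: (derivableD dF dG).
by rewrite !derive1E (deriveD dF dG).
Qed.

Lemma mder_opp m p (F : R -> 'M[R]_(m,p)) t : derivable F t 1 ->
  derivable (fun s => - F s) t 1 /\ derive1 (fun s => - F s) t = - derive1 F t.
Proof.
move=> dF; split; first exact: (derivableN dF).
by rewrite !derive1E (deriveN dF).
Qed.

Lemma mder_cst m p (A : 'M[R]_(m,p)) t :
  derivable (fun s : R => A) t 1 /\ derive1 (fun s : R => A) t = 0.
Proof.
split; first exact: derivable_cst.
by rewrite derive1E derive_cst.
Qed.

End MD.
Section Alg.
Variables (R : realType) (n : nat) (ns : seq nat).
Local Notation d := (size ns).
Local Notation J := (Jmat R ns n).

Definition jv (k : 'I_d.+1) (i : 'I_n) : R := if blk ns n i == k :> nat then 1 else -1.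

Lemma blk_lt (i : 'I_n) : (blk ns n i < d.+1)%N.
Proof. by rewrite ltnS /blk count_size. Qed.

Definition bk (i : 'I_n) : 'I_d.+1 := Ordinal (blk_lt i).

Lemma jv_bk i : jv (bk i) i = 1.
Proof. by rewrite /jv eqxx. Qed.

Lemma jv_nbk k i : k != bk i -> jv k i = -1.
Proof.
move=> h; rewrite /jv; case: eqP => // E.
by move: h; rewrite -(inj_eq val_inj) /= E eqxx.
Qed.

Lemma bk_eq i j : (bk i == bk j) = (blk ns n i == blk ns n j).
Proof. by rewrite -(inj_eq val_inj). Qed.

Lemma JmatE k : J k = diag_mx (\row_i jv k i).
Proof.
apply/matrixP => i j; rewrite !mxE; case E: (i == j).
  by rewrite mulr1n.
by rewrite mulr0n.
Qed.

Lemma mulJr (A : 'M[R]_n) k r s : (A *m J k) r s = A r s * jv k s.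
Proof. by rewrite JmatE mul_mx_diag !mxE. Qed.

Lemma mulJl (A : 'M[R]_n) k r s : (J k *m A) r s = jv k r * A r s.
Proof. by rewrite JmatE mul_diag_mx !mxE. Qed.

Lemma mxDE (A B : 'M[R]_n) i j : (A + B) i j = A i j + B i j.
Proof. by rewrite mxE. Qed.
Lemma mxNE (A : 'M[R]_n) i j : (- A) i j = - A i j.
Proof. by rewrite mxE. Qed.
Lemma mxME (A B : 'M[R]_n) i j : (A *m B) i j = \sum_u A i u * B u j.
Proof. by rewrite mxE. Qed.

Definition frobs (A B : 'M[R]_n) := \sum_i \sum_j A i j * B i j.

Lemma frob_tr (A B : 'M[R]_n) : frob R n A B = \tr (A *m B^T).
Proof.
rewrite /frob /mxtrace; apply: eq_bigr => i _; rewrite mxE.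
by apply: eq_bigr => j _; rewrite mxE.
Qed.

Lemma frob_conj (U A B : 'M[R]_n) : U^T *m U = 1%:M ->
  frob R n (U *m A *m U^T) (U *m B *m U^T) = frob R n A B.
Proof.
move=> hU; rewrite !frob_tr !trmx_mul !trmxK.
rewrite -!mulmxA (mulmxA U^T U) hU mul1mx.
by rewrite mxtrace_mulC -!mulmxA hU mulmx1.
Qed.

Definition keyM (M : 'I_d.+1 -> 'M[R]_n) r s := M (bk s) r s - M (bk r) r s.

Lemma sum_struct (M W : 'I_d.+1 -> 'M[R]_n) :
  (forall k r s, k != bk r -> k != bk s -> W k r s = 0) ->
  (forall k r s, bk r = bk s -> W k r s = 0) ->
  (forall r s, bk r != bk s -> W (bk r) r s = - W (bk s) r s) ->
  \sum_k frob R n (M k) (W k) =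
  \sum_r \sum_s (if bk r == bk s then 0 else W (bk s) r s * keyM M r s).
Proof.
move=> S1 S1' S2; rewrite /frob exchange_big /=; apply: eq_bigr => r _.
rewrite exchange_big /=; apply: eq_bigr => s _.
case: eqP => E.
  by apply: big1 => k _; rewrite S1' ?mulr0.
rewrite (bigD1 (bk s)) //= (bigD1 (bk r)) /=; last by apply/eqP => E'; apply: E.
rewrite big1 ?addr0; last first.
  by move=> k /andP[h1 h2]; rewrite S1 ?mulr0 // eq_sym.
rewrite S2; last by apply/eqP.
rewrite /keyM; ring.
Qed.

Lemma key_id (L X X' : 'M[R]_n) r s :
  (forall i j, bk i = bk j -> L i j = 0) ->
  (forall i j, bk i = bk j -> X i j = 0) ->
  bk r != bk s ->
  keyM (fun k => (X' *m J k - J k *m X') + L *m (X *m J k - J k *m X)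
                  - (X *m J k - J k *m X) *m L) r s
  = 4 * X' r s + 2 * (L *m X - X *m L) r s.
Proof.
move=> HL HX ne.
have Ment : forall k, ((X' *m J k - J k *m X') + L *m (X *m J k - J k *m X)
                  - (X *m J k - J k *m X) *m L) r s =
    X' r s * (jv k s - jv k r) +
    \sum_u (L r u * X u s * (jv k s - jv k u) - X r u * (jv k u - jv k r) * L u s).
  move=> k; rewrite !mxDE !mxNE !mulJr !mulJl [(L *m _) r s]mxME [(_ *m L) r s]mxME.
  rewrite -addrA -sumrB; congr (_ + _); first ring.
  apply: eq_bigr => u _; rewrite !mxDE !mxNE !mulJr !mulJl; ring.
have ne' : bk s != bk r by rewrite eq_sym.
rewrite /keyM !Ment !jv_bk (jv_nbk _ _ ne) (jv_nbk _ _ ne').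
rewrite !mxE -sumrB.
set S1 := \sum_u _; set S2 := \sum_u _.
have E : S1 - S2 = 2 * (\sum_u (L r u * X u s - X r u * L u s)).
  rewrite /S1 /S2 -sumrB mulr_sumr; apply: eq_bigr => u _.
  case: (eqVneq (bk u) (bk r)) => [Er|Nr].
    have h : bk s != bk u by rewrite Er.
    rewrite -Er jv_bk (jv_nbk _ _ h) (HL r u (esym Er)) (HX r u (esym Er)); ring.
  case: (eqVneq (bk u) (bk s)) => [Es|Ns].
    have h : bk r != bk u by rewrite Es.
    rewrite -Es jv_bk (jv_nbk _ _ h) (HL u s Es) (HX u s Es); ring.
  rewrite (jv_nbk (bk r) u) 1?eq_sym // (jv_nbk (bk s) u) 1?eq_sym //; ring.
rewrite -E; ring.
Qed.

End Alg.
Section Giv.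
Variables (R : realType) (n : nat).

Lemma trD (A B : 'M[R]_n) : (A + B)^T = A^T + B^T.
Proof. by apply/matrixP => i j; rewrite !mxE. Qed.
Lemma trN (A : 'M[R]_n) : (- A)^T = - A^T.
Proof. by apply/matrixP => i j; rewrite !mxE. Qed.
Lemma trZ a (A : 'M[R]_n) : (a *: A)^T = a *: A^T.
Proof. by apply/matrixP => i j; rewrite !mxE. Qed.

Lemma der_scalf (f : R -> R) (B : 'M[R]_n) t : derivable f t 1 ->
  derivable (fun s => f s *: B) t 1 /\ derive1 (fun s => f s *: B) t = derive1 f t *: B.
Proof.
move=> df.
have E : forall i j, (fun s => (f s *: B) i j) = (B i j) \o* f.
  by move=> i j; apply/funext => s; rewrite mxE.
have dd : derivable (fun s => f s *: B) t 1.
  apply/derivable_mxP => i j; rewrite E.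
  by apply: derivableM => //; exact: derivable_cst.
split => //; rewrite mx_der //; apply/matrixP => i j; rewrite !mxE E.
by rewrite derive1E deriveMr // -derive1E mulrC.
Qed.

Lemma combo (I D A : 'M[R]_n) :
  I *m I = I -> I *m D = D -> D *m I = D -> I *m A = A -> A *m I = A ->
  D *m D = D -> D *m A = A -> A *m D = A -> A *m A = - D ->
  forall a b c a' b' c' : R,
  (a *: I + b *: D + c *: A) *m (a' *: I + b' *: D + c' *: A) =
  (a * a') *: I + (a * b' + b * a' + b * b' - c * c') *: D
     + (a * c' + c * a' + b * c' + c * b') *: A.
Proof.
move=> II ID DI IA AI DD DA AD AA a b c a' b' c'.
rewrite !mulmxDl !mulmxDr -!scalemxAl -!scalemxAr.
rewrite II ID DI IA AI DD DA AD AA.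
apply/matrixP => i j; rewrite !mxE; ring.
Qed.

Lemma givens (p q : 'I_n) : p != q -> exists G : R -> 'M[R]_n,
  [/\ forall s, G s *m (G s)^T = 1%:M, G 0 = 1%:M, forall s, derivable G s 1 &
      derive1 G 0 = delta_mx p q - delta_mx q p].
Proof.
move=> pq.
pose D : 'M[R]_n := delta_mx p p + delta_mx q q.
pose A : 'M[R]_n := delta_mx p q - delta_mx q p.
have qp : q != p by rewrite eq_sym.
have DD : D *m D = D.
  by rewrite /D !mulmxDl !mulmxDr !mul_delta_mx !mul_delta_mx_0 // addr0 add0r.
have DA : D *m A = A.
  by rewrite /D /A !mulmxDl !mulmxBr !mul_delta_mx !mul_delta_mx_0 // subr0 sub0r.
have AD : A *m D = A.
  by rewrite /D /A !mulmxBl !mulmxDr !mul_delta_mx !mul_delta_mx_0 // addr0 add0r.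
have AA : A *m A = - D.
  rewrite /D /A !mulmxBl !mulmxBr !mul_delta_mx !mul_delta_mx_0 //.
  by rewrite subr0 sub0r opprD.
have DT : D^T = D by rewrite /D trD !trmx_delta.
have AT : A^T = - A by rewrite /A trD trN !trmx_delta opprB addrC.
have Adef : A = delta_mx p q - delta_mx q p by [].
clearbody D A.
pose G := fun s : R => 1 *: (1%:M : 'M[R]_n) + (cos s - 1) *: D + sin s *: A.
exists G; split.
- move=> s; rewrite /G !trD !trZ trmx1 DT AT scalerN -scaleNr.
  rewrite combo ?mul1mx ?mulmx1 //.
  have -> : 1 * (cos s - 1) + (cos s - 1) * 1 + (cos s - 1) * (cos s - 1) - sin s * - sin s
      = cos s ^+ 2 + sin s ^+ 2 - 1 by ring.
  rewrite cos2Dsin2 subrr scale0r addr0.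
  have -> : 1 * - sin s + sin s * 1 + (cos s - 1) * - sin s + sin s * (cos s - 1) = 0 by ring.
  by rewrite scale0r addr0 mulr1 scale1r.
- by rewrite /G cos0 sin0 subrr !scale0r !addr0 scale1r.
- move=> s.
  have dc : derivable (fun s => cos s - 1 : R) s 1.
    by apply: derivableB; [exact: derivable_cos| exact: derivable_cst].
  have d1 := der_scalf _ D _ dc.
  have d2 := der_scalf _ A _ (@derivable_sin R s).
  apply: derivableD; first apply: derivableD.
  + exact: derivable_cst.
  + exact: d1.1.
  + exact: d2.1.
- have dc : derivable (fun s => cos s - 1 : R) 0 1.
    by apply: derivableB; [exact: derivable_cos| exact: derivable_cst].
  have d1 := der_scalf _ D _ dc.
  have d2 := der_scalf _ A _ (@derivable_sin R 0).
  rewrite /G derive1E deriveD; last exact: d2.1; last first.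
    by apply: derivableD; [exact: derivable_cst| exact: d1.1].
  rewrite deriveD; [|exact: derivable_cst| exact: d1.1].
  rewrite derive_cst add0r -!derive1E d1.2 d2.2.
  rewrite derive1E deriveB; [|exact: derivable_cos| exact: derivable_cst].
  rewrite derive_cst subr0 -derive1E.
  by rewrite !derive1E !derive_val sin0 oppr0 scale0r add0r cos0 scale1r Adef.
Qed.

Lemma sum_delta (f : 'I_n -> 'I_n -> R) (p q : 'I_n) :
  \sum_u \sum_v f u v * delta_mx p q u v = f p q.
Proof.
rewrite [LHS](bigD1 p) //= [X in _ + X]big1 ?addr0; last first.
  move=> u up; apply: big1 => v _; rewrite mxE (negbTE up) /= mulr0 //.
rewrite (bigD1 q) //= big1 ?addr0; last first.
  move=> v vq; rewrite mxE (negbTE vq) andbF mulr0 //.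
by rewrite mxE !eqxx mulr1.
Qed.

End Giv.

Arguments mx_der {R m p F t}.
Arguments mder_mul {R m p q F G t}.
Arguments mder_tr {R m p F t}.
Arguments mder_add {R m p F G t}.
Arguments mder_opp {R m p F t}.
Arguments mder_cst {R m p} A t.
Arguments jv {R n ns}.
Arguments bk {n} ns.
Arguments jv_bk {R n ns}.
Arguments jv_nbk {R n ns}.
Arguments JmatE {R n ns}.
Arguments mulJr {R n ns}.
Arguments mulJl {R n ns}.
Arguments frob_conj {R n}.
Arguments keyM {R n ns}.
Arguments sum_struct {R n ns}.
Arguments key_id {R n ns}.
Arguments der_scalf {R n}.
Arguments givens {R n}.
Arguments sum_delta {R n}.
Arguments mxDE {R n}.
Arguments mxNE {R n}.
Arguments mxME {R n}.

Section Extra.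
Variables (R : realType) (n : nat) (ns : seq nat).
Local Notation d := (size ns).
Local Notation J := (Jmat R ns n).

Lemma jv_sq (k : 'I_d.+1) (i : 'I_n) : jv k i * jv k i = 1 :> R.
Proof. by rewrite /jv; case: ifP => _; rewrite ?mulr1 ?mulrNN ?mulr1. Qed.

Lemma JJ1 k : J k *m J k = 1%:M.
Proof.
apply/matrixP => i j; rewrite mulJl !mxE.
case: (i == j); last by rewrite mulr0.
by rewrite (jv_sq k i).
Qed.

Lemma mulJ1l (k : 'I_d.+1) (B : 'M[R]_n) r s :
  ((J k + 1%:M) *m B) r s = jv k r * B r s + B r s.
Proof. by rewrite mulmxDl mul1mx mxDE mulJl. Qed.

Lemma mulJ1r (k : 'I_d.+1) (B : 'M[R]_n) r s :
  (B *m (J k + 1%:M)) r s = B r s * jv k s + B r s.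
Proof. by rewrite mulmxDr mulmx1 mxDE mulJr. Qed.

Lemma Jent k (i j : 'I_n) : J k i j = if i == j then jv k i else 0.
Proof. by rewrite mxE. Qed.

Lemma JJ0 k l : k != l -> (J k + 1%:M) *m (J l + 1%:M) = 0.
Proof.
move=> kl; apply/matrixP => i j; rewrite mulJ1l mxDE Jent [1%:M i j]mxE [(0 : 'M[R]_n) i j]mxE.
case E: (i == j); last by rewrite mulr0n addr0 mulr0 addr0.
rewrite mulr1n.
case: (eqVneq k (bk ns i)) => [Ek|Nk].
  have Nl : l != bk ns i by rewrite -Ek eq_sym.
  by rewrite (jv_nbk l i Nl) addNr mulr0 addr0.
rewrite (jv_nbk k i Nk); ring.
Qed.

Lemma conjM (U A B : 'M[R]_n) : U^T *m U = 1%:M ->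
  U *m A *m U^T *m (U *m B *m U^T) = U *m (A *m B) *m U^T.
Proof.
move=> h; rewrite -!mulmxA; congr (_ *m _).
by rewrite !mulmxA -(mulmxA A) h mulmx1.
Qed.

Lemma conjD1 (U A : 'M[R]_n) : U *m U^T = 1%:M ->
  U *m A *m U^T + 1%:M = U *m (A + 1%:M) *m U^T.
Proof. by move=> h; rewrite mulmxDr mulmx1 mulmxDl h. Qed.

Lemma conj_back (U A A' B C : 'M[R]_n) : U^T *m U = 1%:M ->
  U^T *m (A *m (U *m B *m U^T) + (U *m C *m U^T) *m A') *m U =
  (U^T *m A *m U) *m B + C *m (U^T *m A' *m U).
Proof.
move=> h; rewrite mulmxDr mulmxDl; congr (_ + _).
  by rewrite !mulmxA -[_ *m U^T *m U]mulmxA h mulmx1.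
by rewrite !mulmxA h mul1mx -!mulmxA.
Qed.

Lemma wzero (w a : R) : a * a = 1 -> w * a + a * w = 0 -> w = 0.
Proof.
move=> aa h.
have h2 : (w * a) * 2 = 0 by rewrite -h; ring.
have : w * a = 0.
  by move: h2; move/eqP; rewrite mulf_eq0 pnatr_eq0 orbF => /eqP.
by move=> wa; rewrite -[w]mulr1 -aa mulrA wa mul0r.
Qed.

End Extra.

Arguments jv_sq {R n ns}.
Arguments JJ1 {R n ns}.
Arguments JJ0 {R n ns}.
Arguments mulJ1l {R n ns}.
Arguments mulJ1r {R n ns}.
Arguments conjM {R n}.
Arguments conjD1 {R n}.
Arguments conj_back {R n}.
Arguments bk_eq {n ns}.
Arguments wzero {R}.
Lemma mxZE (R : realType) (n : nat) (a : R) (A : 'M[R]_n) i j : (a *: A) i j = a * A i j.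
Proof. by rewrite mxE. Qed.
Lemma piblkE (R : realType) (ns : seq nat) (n : nat) (A : 'M[R]_n) i j :
  piblk R ns n A i j = if blk ns n i == blk ns n j then 0 else A i j.
Proof. by rewrite mxE. Qed.
Theorem propositionB2 (R : realType) (n : nat) (ns : seq nat)
  (Hd : (0 < size ns)%N)
  (Hns : sorted ltn (0%N :: rcons ns n))
  (V X : R -> 'M[R]_n)
  (HVorth : forall t, orthogonal_mx R n (V t))
  (HVdiff : forall t, derivable V t 1)
  (HLam : forall t (i j : 'I_n), blk ns n i = blk ns n j ->
            ((V t)^T *m derive1 V t) i j = 0)
  (HXskew : forall t, skew_mx R n (X t))
  (HXdiff : forall t, derivable X t 1)
  (HXblk : forall t (i j : 'I_n), blk ns n i = blk ns n j -> X t i j = 0) :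
  let Lam := fun t => (V t)^T *m derive1 V t in
  let c := fun t (k : 'I_(size ns).+1) => V t *m Jmat R ns n k *m (V t)^T in
  let Y := fun t (k : 'I_(size ns).+1) =>
             V t *m (X t *m Jmat R ns n k - Jmat R ns n k *m X t) *m (V t)^T in
  parallel_along R ns n c Y <->
  (forall t, derive1 X t = 2^-1 *: piblk R ns n (X t *m Lam t - Lam t *m X t)).
Proof.
move=> Lam c Y.
have VTV : forall t, (V t)^T *m V t = 1%:M by move=> t; apply: mulmx1C; exact: HVorth.
have VVT : forall t, V t *m (V t)^T = 1%:M by move=> t; exact: HVorth.
have Vd : forall t, derive1 V t = V t *m Lam t.
  by move=> t; rewrite /Lam mulmxA VVT mul1mx.
have Lskew : forall t, (Lam t)^T = - Lam t.
  move=> t.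
  have [_ e1] := mder_mul (mder_tr (HVdiff t)).1 (HVdiff t).
  rewrite (mder_tr (HVdiff t)).2 in e1.
  have E : (fun s => (V s)^T *m V s) = (fun _ => 1%:M) by apply/funext => s; exact: VTV.
  rewrite E (mder_cst _ t).2 Vd trmx_mul mulmxA -[_ *m _ *m V t]mulmxA VTV mulmx1 in e1.
  by rewrite mul1mx in e1; apply/eqP; rewrite -addr_eq0 -e1.
have Lblk : forall t i j, bk ns i = bk ns j -> Lam t i j = 0.
  by move=> t i j /(congr1 val) /= h; exact: HLam.
have Xblk : forall t i j, bk ns i = bk ns j -> X t i j = 0.
  by move=> t i j /(congr1 val) /= h; exact: HXblk.
have Xdblk : forall t i j, bk ns i = bk ns j -> derive1 X t i j = 0.
  move=> t i j h; rewrite mx_der // mxE.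
  have -> : (fun s => X s i j) = (fun _ => 0) by apply/funext => s; exact: Xblk.
  by rewrite derive1_cst.
have Xdskew : forall t, (derive1 X t)^T = - derive1 X t.
  move=> t; rewrite -(mder_tr (HXdiff t)).2 -(mder_opp (HXdiff t)).2.
  by congr derive1; apply/funext => s; exact: HXskew.
pose K t k := X t *m Jmat R ns n k - Jmat R ns n k *m X t.
pose M t k := (derive1 X t *m Jmat R ns n k - Jmat R ns n k *m derive1 X t)
   + Lam t *m K t k - K t k *m Lam t.
have Yd : forall t k, derive1 (fun s => Y s k) t = V t *m M t k *m (V t)^T.
  move=> t k.
  have dXJ := mder_mul (HXdiff t) (mder_cst (Jmat R ns n k) t).1.
  have dJX := mder_mul (mder_cst (Jmat R ns n k) t).1 (HXdiff t).
  have dK := mder_add dXJ.1 (mder_opp dJX.1).1.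
  have d1 := mder_mul (HVdiff t) dK.1.
  have d2 := mder_mul d1.1 (mder_tr (HVdiff t)).1.
  rewrite /Y /= d2.2 d1.2 dK.2 (mder_opp dJX.1).2 dXJ.2 dJX.2 (mder_tr (HVdiff t)).2 (mder_cst _ t).2.
  rewrite Vd trmx_mul Lskew /M /K mulmx0 mul0mx addr0 add0r.
  move: (V t) (Lam t) (X t *m _ - _) (X^`()%classic t *m _ - _) => A B C D.
  rewrite !mulmxDl !mulmxDr ?mulmxBl ?mulmxBr ?mulmxN ?mulNmx !mulmxA.
  rewrite !mulmxDl ?mulmxN ?mulNmx !mulmxA.
  by congr (_ - _); rewrite addrC.
have Fr : forall t (Wt : 'I_(size ns).+1 -> 'M[R]_n),
   frob_tuple R (size ns) n (fun k => derive1 (fun s => Y s k) t)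
      (fun k => V t *m Wt k *m (V t)^T) = \sum_k frob R n (M t k) (Wt k).
  by move=> t Wt; rewrite /frob_tuple; apply: eq_bigr => k _; rewrite Yd frob_conj.
have keyt : forall t r s, bk ns r != bk ns s ->
   keyM (M t) r s = 4 * derive1 X t r s + 2 * (Lam t *m X t - X t *m Lam t) r s.
  by move=> t r s ne; rewrite /M /K; apply: key_id => //; [exact: Lblk | exact: Xblk].
split => [Hpar | Hform].
  move=> t; apply/matrixP => r s; rewrite mxZE piblkE.
  case: (eqVneq (bk ns r) (bk ns s)) => [E|ne].
    by rewrite Xdblk // -bk_eq E eqxx mulr0.
  have rs : r != s by apply/eqP => rs; move: ne; rewrite rs eqxx.
  have [G [Gorth G0 Gd GA]] := @givens R n r s rs.
  pose A : 'M[R]_n := delta_mx r s - delta_mx s r.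
  have AT : A^T = - A by rewrite /A trD trN !trmx_delta opprB addrC.
  pose Wt k := A *m Jmat R ns n k - Jmat R ns n k *m A.
  have tang : tangent_Flag R ns n (c t) (fun k => V t *m Wt k *m (V t)^T).
    exists (fun k u => V t *m (G u *m Jmat R ns n k *m (G u)^T) *m (V t)^T); split.
    - move=> k u.
      have d1 := mder_mul (Gd u) (mder_cst (Jmat R ns n k) u).1.
      have d2 := mder_mul d1.1 (mder_tr (Gd u)).1.
      have d3 := mder_mul (mder_cst (V t) u).1 d2.1.
      exact: (mder_mul d3.1 (mder_cst (V t)^T u).1).1.
    - move=> u; exists (V t *m G u); split.
        rewrite /orthogonal_mx trmx_mul !mulmxA -(mulmxA (V t)) Gorth mulmx1; exact: VVT.
      by move=> k; rewrite trmx_mul !mulmxA.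
    - by move=> k; rewrite G0 trmx1 mulmx1 mul1mx.
    - move=> k.
      have d1 := mder_mul (Gd 0) (mder_cst (Jmat R ns n k) 0).1.
      have d2 := mder_mul d1.1 (mder_tr (Gd 0)).1.
      have d3 := mder_mul (mder_cst (V t) 0).1 d2.1.
      have d4 := mder_mul d3.1 (mder_cst (V t)^T 0).1.
      rewrite d4.2 d3.2 d2.2 d1.2 (mder_tr (Gd 0)).2 !(mder_cst _ 0).2 G0 GA -/A.
      rewrite AT trmx1 !mulmx0 !mul0mx !addr0 !add0r mulmx1 mul1mx /Wt.
      by rewrite mulmxN.
  have H0 := Hpar t _ tang.
  have WtE : forall k u v, Wt k u v = A u v * (jv k v - jv k u).
    by move=> k u v; rewrite /Wt mxDE mxNE mulJr mulJl; ring.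
  have S1 : forall k u v, k != bk ns u -> k != bk ns v -> Wt k u v = 0.
    by move=> k u v ku kv; rewrite WtE (jv_nbk _ _ ku) (jv_nbk _ _ kv) subrr mulr0.
  have S1' : forall k u v, bk ns u = bk ns v -> Wt k u v = 0.
    by move=> k u v /(congr1 val) /= E; rewrite WtE /jv E subrr mulr0.
  have S2 : forall u v, bk ns u != bk ns v -> Wt (bk ns u) u v = - Wt (bk ns v) u v.
    move=> u v nuv; have nvu : bk ns v != bk ns u by rewrite eq_sym.
    rewrite !WtE !jv_bk (jv_nbk _ _ nuv) (jv_nbk _ _ nvu); ring.
  rewrite Fr (sum_struct _ _ S1 S1' S2) in H0.
  pose f u v := if bk ns u == bk ns v then 0 else 2 * keyM (M t) u v.
  have H1 : \sum_u \sum_v f u v * A u v = 0.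
    rewrite -[RHS]H0; apply: eq_bigr => u _; apply: eq_bigr => v _; rewrite /f.
    case: ifP => [_|/negbT nuv]; first by rewrite mul0r.
    have nvu : bk ns v != bk ns u by rewrite eq_sym.
    rewrite WtE jv_bk (jv_nbk _ _ nvu); ring.
  have H2 : \sum_u \sum_v f u v * delta_mx r s u v - \sum_u \sum_v f u v * delta_mx s r u v = 0.
    rewrite -[RHS]H1 -sumrB; apply: eq_bigr => u _; rewrite -sumrB; apply: eq_bigr => v _.
    by rewrite /A mxDE mxNE; ring.
  rewrite !sum_delta /f (negbTE ne) eq_sym (negbTE ne) !keyt // 1?eq_sym // in H2.
  have Xs : derive1 X t s r = - derive1 X t r s.
    have := congr1 (fun Z : 'M[R]_n => Z r s) (Xdskew t); rewrite /= mxE mxNE; done.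
  have Cskew : (Lam t *m X t - X t *m Lam t)^T = - (Lam t *m X t - X t *m Lam t).
    have HX : (X t)^T = - X t by exact: HXskew.
    by rewrite trD trN (trmx_mul (Lam t) (X t)) (trmx_mul (X t) (Lam t)) Lskew HX !mulmxN !mulNmx !opprK opprB.
  have Cs : (Lam t *m X t - X t *m Lam t) s r = - (Lam t *m X t - X t *m Lam t) r s.
    have := congr1 (fun Z : 'M[R]_n => Z r s) Cskew; rewrite /= mxNE mxE; done.
  rewrite -bk_eq (negbTE ne).
  have CC : (X t *m Lam t - Lam t *m X t) r s = - (Lam t *m X t - X t *m Lam t) r s.
    by rewrite !mxDE !mxNE opprB.
  rewrite CC; rewrite Xs Cs in H2; lra.
move=> t W [g [gd gF g0 gW]].
pose Wt k := (V t)^T *m W k *m V t.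
have WE : W = fun k => V t *m Wt k *m (V t)^T.
  by apply/funext => k; rewrite /Wt !mulmxA VVT mul1mx -mulmxA VVT mulmx1.
rewrite WE Fr.
have gsq : forall k s, g k s *m g k s = 1%:M.
  move=> k s; case: (gF s) => U [hU hg]; rewrite hg conjM ?JJ1 ?mulmx1 //.
  exact: mulmx1C.
have gk1 : forall k l s, k != l -> (g k s + 1%:M) *m (g l s + 1%:M) = 0.
  move=> k l s kl; case: (gF s) => U [hU hg]; rewrite !hg !conjD1 // conjM ?JJ0 ?mulmx0 ?mul0mx //.
  exact: mulmx1C.
have e1 : forall k, W k *m c t k + c t k *m W k = 0.
  move=> k; have d := mder_mul (gd k 0) (gd k 0).
  have E : (fun s => g k s *m g k s) = (fun _ => 1%:M) by apply/funext => s; exact: gsq.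
  have := d.2; rewrite E (mder_cst _ 0).2 -gW g0 => ->; done.
have e2 : forall k l, k != l -> W k *m (c t l + 1%:M) + (c t k + 1%:M) *m W l = 0.
  move=> k l kl.
  have dk := mder_add (gd k 0) (mder_cst 1%:M 0).1.
  have dl := mder_add (gd l 0) (mder_cst 1%:M 0).1.
  have d := mder_mul dk.1 dl.1.
  have E : (fun s => (g k s + 1%:M) *m (g l s + 1%:M)) = (fun _ => 0).
    by apply/funext => s; exact: gk1.
  have := d.2; rewrite E (mder_cst _ 0).2 dk.2 dl.2 (mder_cst _ 0).2 !addr0 -!gW !g0 => ->; done.
have e1' : forall k, Wt k *m Jmat R ns n k + Jmat R ns n k *m Wt k = 0.
  move=> k; rewrite /Wt -conj_back; last exact: VTV.
  by rewrite -/(c t k) e1 mulmx0 mul0mx.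
have e2' : forall k l, k != l ->
    Wt k *m (Jmat R ns n l + 1%:M) + (Jmat R ns n k + 1%:M) *m Wt l = 0.
  move=> k l kl; rewrite /Wt -conj_back; last exact: VTV.
  by rewrite -!conjD1 // -/(c t k) -/(c t l) e2 // mulmx0 mul0mx.
have Seq : forall k r s, jv k r = jv k s :> R -> Wt k r s = 0.
  move=> k r s E; apply: (wzero _ (jv k s)); first exact: jv_sq.
  have := congr1 (fun Z : 'M[R]_n => Z r s) (e1' k); rewrite /= mxDE mulJr mulJl E [(0 : 'M[R]_n) r s]mxE; done.
rewrite sum_struct.
- apply: big1 => r _; apply: big1 => s _; case: ifP => // /negbT ne.
  rewrite keyt // Hform mxZE piblkE.
  rewrite -bk_eq (negbTE ne) !mxDE !mxNE; lra.
- move=> k r s kr ks; apply: Seq; by rewrite (jv_nbk _ _ kr) (jv_nbk _ _ ks).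
- move=> k r s /(congr1 val) /= E; apply: Seq; by rewrite /jv E.
- move=> r s ne.
  have := congr1 (fun Z : 'M[R]_n => Z r s) (e2' _ _ ne).
  rewrite /= mxDE mulJ1l mulJ1r jv_bk jv_bk [(0 : 'M[R]_n) r s]mxE => h; lra.
Qed.
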